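(* Let $L$ be a Lie superalgebra of the type $S(t)$. Then $\overline{exp}^{gr}(L)=\limsup_{n\to\infty}\sqrt[n]{c_n^{gr}(L)}\le 2t$ for even $t$, and $\overline{exp}^{gr}(L)\le 2t-1$ for odd $t$.
   Context: $F$ is a field of characteristic zero. For a $\mathbb Z_2$-graded algebra $L=L_0\oplus L_1$, let $P_{k,n-k}$ be the space of multilinear nonassociative polynomials in even variables $x_1,\dots,x_k$ and odd variables $y_1,\dots,y_{n-k}$ of the absolutely free $\mathbb Z_2$-graded algebra, $Id^{gr}(L)$ the ideal of graded identities of $L$, $c_{k,n-k}(L)=\dim P_{k,n-k}/(P_{k,n-k}\cap Id^{gr}(L))$, and $c_n^{gr}(L)=\sum_{k=0}^n\binom nk c_{k,n-k}(L)$. Superalgebra $S(t)$, $t\ge 2$: take $R=UT_t(F)$ with an involution $\ast$, either orthogonal $e_{ij}^\circ=e_{t+1-j,t+1-i}$, or (for $t=2m$) symplectic $X^s=DX^\circ D^{-1}$, $D=\mathrm{diag}(E,-E)$ with $E$ the $m\times m$ identity. With $R^\pm$ the symmetric/skew elements, $S(t)=\{\begin{pmatrix} x& y\\ z& -x^\ast\end{pmatrix}: x\in R, y\in R^+, z\in R^-\}$, even part block-diagonal, odd part block-off-diagonal, with the supercommutator product. *)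

(* Defs.v *)
From HB Require Import structures.
From mathcomp Require Import all_boot all_order all_algebra.
From mathcomp Require Import boolp classical_sets reals ereal sequences exp.
Set Implicit Arguments. Unset Strict Implicit. Unset Printing Implicit Defensive.
Import Order.TTheory GRing.Theory Num.Theory.
Local Open Scope ring_scope.

(* A nonassociative monomial: a binary bracketing with leaves labelled by
   variable indices.  In P_{k,n-k}, index i < k stands for the even variable
   x_{i+1}, and index i with k <= i < n for the odd variable y_{i-k+1}. *)
Inductive tree := Leaf of nat | Node of tree & tree.

(* all bracketings of the word s (in the given left-to-right order);
   [fuel] must be >= size s *)
Fixpoint bracketings (fuel : nat) (s : seq nat) : seq tree :=
  match fuel with
  | 0 => [::]
  | fuel'.+1 =>
    match s with
    | [:: x] => [:: Leaf x]
    | _ => flatten [seq [seq Node l r | l <- bracketings fuel' (take i s),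
                                       r <- bracketings fuel' (drop i s)]
                   | i <- iota 1 (size s).-1]
    end
  end.

(* The basis of multilinear monomials of degree n in the variables 0..n-1:
   every bracketing of every permutation of 0..n-1 (no repetitions). *)
Definition mons (n : nat) : seq tree :=
  flatten [seq bracketings n p | p <- permutations (iota 0 n)].

Section Eval.
Variables (F : fieldType) (N : nat).

Fixpoint tparity (k : nat) (m : tree) : bool :=
  match m with
  | Leaf i => (k <= i)%N
  | Node l r => tparity k l (+) tparity k r
  end.

Definition scomm (pa pb : bool) (a b : 'M[F]_N) : 'M[F]_N :=
  a *m b - (-1) ^+ (pa && pb) *: (b *m a).

Fixpoint teval (k : nat) (sub : nat -> 'M[F]_N) (m : tree) : 'M[F]_N :=
  match m with
  | Leaf i => sub i
  | Node l r => scomm (tparity k l) (tparity k r) (teval k sub l) (teval k sub r)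
  end.

(* A polynomial of P_{k,n-k} is given by its coordinate row vector in the
   monomial basis [mons n]; it is a graded identity of the superalgebra
   L = L0 (+) L1 iff it vanishes under all graded substitutions. *)
Definition is_gr_identity (L0 L1 : 'M[F]_N -> Prop) (k n : nat)
    (f : 'rV[F]_(size (mons n))) : Prop :=
  forall sub : nat -> 'M[F]_N,
    (forall i, i < k -> L0 (sub i))%N ->
    (forall i, k <= i < n -> L1 (sub i))%N ->
    \sum_(j < size (mons n)) f 0 j *: teval k sub (nth (Leaf 0) (mons n) j) = 0.

(* c_{k,n-k}(L) = dim P_{k,n-k} / (P_{k,n-k} \cap Id^gr(L)):
   the largest d such that some d polynomials of P_{k,n-k} are linearly
   independent modulo Id^gr(L). *)
Definition codim_kn (L0 L1 : 'M[F]_N -> Prop) (k n : nat) : nat :=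
  \max_(d < (size (mons n)).+1 |
        `[< exists A : 'M[F]_(d, size (mons n)),
              forall c : 'rV[F]_d, @is_gr_identity L0 L1 k n (c *m A) -> c = 0 >])
     (d : nat).

Definition gr_codim (L0 L1 : 'M[F]_N -> Prop) (n : nat) : nat :=
  (\sum_(k < n.+1) 'C(n, k) * codim_kn L0 L1 k n)%N.

End Eval.

Inductive inv_kind := Orthogonal | Symplectic.

Section St.
Variables (F : fieldType) (t : nat).

Definition is_UT (X : 'M[F]_t) : Prop := forall i j : 'I_t, (j < i)%N -> X i j = 0.

Definition inv_orth (X : 'M[F]_t) : 'M[F]_t := \matrix_(i, j) X (rev_ord j) (rev_ord i).

Definition Dsymp : 'M[F]_t := \matrix_(i, j) (if i == j then (if (i < t./2)%N then 1 else -1) else 0).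

(* symplectic involution X -> D X° D^{-1} (D^{-1} = D) *)
Definition inv_symp (X : 'M[F]_t) : 'M[F]_t := Dsymp *m inv_orth X *m Dsymp.

Definition invol (kd : inv_kind) : 'M[F]_t -> 'M[F]_t :=
  match kd with Orthogonal => inv_orth | Symplectic => inv_symp end.

Definition St_even (kd : inv_kind) (M : 'M[F]_(t + t)) : Prop :=
  exists x : 'M[F]_t, is_UT x /\ M = block_mx x 0 0 (- invol kd x).

Definition St_odd (kd : inv_kind) (M : 'M[F]_(t + t)) : Prop :=
  exists y z : 'M[F]_t,
    [/\ is_UT y, invol kd y = y, is_UT z, invol kd z = - z & M = block_mx 0 y z 0].

End St.

(* Main.v *)
Require Import Defs.
From HB Require Import structures.
From mathcomp Require Import all_boot all_order all_algebra.
From mathcomp Require Import boolp classical_sets reals ereal sequences exp.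
From mathcomp Require Import topology normedtype.
From mathcomp Require Import zify ring lra.
Set Implicit Arguments. Unset Strict Implicit. Unset Printing Implicit Defensive.
Import Order.TTheory GRing.Theory Num.Theory.
Local Open Scope ring_scope.
Fixpoint tree_eqb (a b : tree) : bool :=
  match a, b with
  | Leaf i, Leaf j => i == j
  | Node l r, Node l' r' => tree_eqb l l' && tree_eqb r r'
  | _, _ => false
  end.

Lemma tree_eqP : Equality.axiom tree_eqb.
Proof.
elim=> [i|l IHl r IHr] [j|l' r'] /=; try by constructor.
  by apply: (iffP eqP) => [->|[]].
apply: (iffP andP) => [[/IHl -> /IHr ->]//|[<- <-]].
by split; [apply/IHl|apply/IHr].
Qed.

HB.instance Definition _ := hasDecEq.Build tree tree_eqP.

Fixpoint leaves (m : tree) : seq nat :=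
  match m with Leaf i => [:: i] | Node l r => leaves l ++ leaves r end.

Lemma bracketings_leaves fuel s m : m \in bracketings fuel s -> leaves m = s.
Proof.
elim: fuel s m => [|f IH] s m //=.
case: s => [|x [|y s]]; [by []| by rewrite inE => /eqP -> |].
move=> /flattenP [ms /mapP [i _ ->]] /allpairsP [[l r] [/= Hl Hr ->]] /=.
by rewrite (IH _ _ Hl) (IH _ _ Hr) cat_take_drop.
Qed.

Lemma mons_leaves n j : (j < size (mons n))%N ->
  perm_eq (leaves (nth (Leaf 0) (mons n) j)) (iota 0 n).
Proof.
move=> hj; have /flattenP [ms /mapP [p Hp ->]] := mem_nth (Leaf 0) hj.
move=> /bracketings_leaves ->.
by rewrite mem_permutations in Hp.
Qed.
Section Grade.
Variables (F : fieldType) (N : nat) (lvl : 'I_N -> nat).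

Definition inG (d : nat) (X : 'M[F]_N) : Prop :=
  forall a b, X a b != 0 -> (lvl a + d <= lvl b)%N.

Lemma inG0 d : inG d 0.
Proof. by move=> a b; rewrite mxE eqxx. Qed.

Lemma inGD d X Y : inG d X -> inG d Y -> inG d (X + Y).
Proof.
move=> hX hY a b; rewrite mxE.
by have [/hX //|/negbNE/eqP ->] := boolP (X a b != 0); rewrite add0r => /hY.
Qed.

Lemma inGZ d c X : inG d X -> inG d (c *: X).
Proof.
move=> hX a b; rewrite mxE mulf_eq0 negb_or => /andP [_]; exact: hX.
Qed.

Lemma inGN d X : inG d X -> inG d (- X).
Proof. by move=> hX a b; rewrite mxE oppr_eq0; exact: hX. Qed.

Lemma inGW d d' X : (d' <= d)%N -> inG d X -> inG d' X.
Proof. by move=> le hX a b /hX; apply: leq_trans; rewrite leq_add2l. Qed.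

Lemma inGM d e X Y : inG d X -> inG e Y -> inG (d + e) (X *m Y).
Proof.
move=> hX hY a b; rewrite mxE.
case: (pickP (fun c => X a c * Y c b != 0)) => [c /= hc|hn]; last first.
  by rewrite big1 ?eqxx // => c _; move/negbFE/eqP: (hn c).
move: hc; rewrite mulf_eq0 negb_or => /andP [/hX h1 /hY h2] _.
by rewrite addnA (leq_trans _ h2) // leq_add2r.
Qed.

Lemma inG_scomm d e p q X Y : inG d X -> inG e Y -> inG (d + e) (scomm p q X Y).
Proof.
move=> hX hY; rewrite /scomm; apply: inGD; first exact: inGM.
by apply/inGN/inGZ; rewrite addnC; apply: inGM.
Qed.

Lemma teval_G k sub (w : nat -> nat) m :
  (forall i, inG (w i) (sub i)) -> inG (\sum_(i <- leaves m) w i) (teval k sub m).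
Proof.
move=> hs; elim: m => [i|l IHl r IHr] /=; first by rewrite big_seq1.
by rewrite big_cat; apply: inG_scomm.
Qed.

Lemma inG_zero Lm d X : (forall a, lvl a < Lm)%N -> (Lm <= d)%N -> inG d X -> X = 0.
Proof.
move=> hl hd hX; apply/matrixP => a b; rewrite mxE; apply/eqP/negP => /negP /hX.
move/(leq_trans (leq_addl _ _)); rewrite leqNgt => /negP; apply.
exact: leq_trans (hl b) hd.
Qed.

End Grade.

Section Multi.
Variables (F : fieldType) (N : nat).

Definition upd (sub : nat -> 'M[F]_N) j X := fun i => if i == j then X else sub i.

Lemma teval_ext k (sub sub' : nat -> 'M[F]_N) m :
  (forall i, i \in leaves m -> sub i = sub' i) -> teval k sub m = teval k sub' m.
Proof.
elim: m => [i|l IHl r IHr] /= h; first by apply: h; rewrite inE.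
rewrite IHl ?IHr // => i hi; apply: h; rewrite mem_cat hi ?orbT //.
Qed.

Lemma scommDl p q a X Y Z :
  scomm p q (a *: X + Y) Z = a *: scomm p q X Z + scomm p q Y Z :> 'M[F]_N.
Proof.
rewrite /scomm mulmxDl mulmxDr -scalemxAl -scalemxAr scalerDr !scalerBr !scalerA mulrC.
by rewrite opprD addrACA.
Qed.

Lemma scommDr p q a X Y Z :
  scomm p q Z (a *: X + Y) = a *: scomm p q Z X + scomm p q Z Y :> 'M[F]_N.
Proof.
rewrite /scomm mulmxDl mulmxDr -scalemxAl -scalemxAr scalerDr !scalerBr !scalerA mulrC.
by rewrite opprD addrACA.
Qed.

Lemma teval_lin k (sub : nat -> 'M[F]_N) j m a X Y :
  count_mem j (leaves m) = 1%N ->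
  teval k (upd sub j (a *: X + Y)) m =
  a *: teval k (upd sub j X) m + teval k (upd sub j Y) m.
Proof.
elim: m => [i|l IHl r IHr] /=.
  by rewrite addn0 /upd; case: eqP => // ->; rewrite eqxx.
rewrite count_cat => hc.
have ext m' Z Z' : j \notin leaves m' -> teval k (upd sub j Z) m' = teval k (upd sub j Z') m'.
  move=> hn; apply: teval_ext => i hi; rewrite /upd; case: eqP => // ei.
  by move: hn; rewrite -ei hi.
case hl: (count_mem j (leaves l)) hc => [|[|n]] //= hc.
  have hn : j \notin leaves l by apply/count_memPn.
  rewrite IHr // (ext l _ X) // (ext l Y X) //.
  by rewrite scommDr.
have hn : j \notin leaves r by apply/count_memPn; move: hc; rewrite add1n => -[].
rewrite IHl // (ext r _ X) // (ext r Y X) //.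
by rewrite scommDl.
Qed.

End Multi.
Section Codim.
Variables (F : fieldType) (N : nat) (lvl : 'I_N -> nat) (Lm : nat).
Hypothesis hlvl : forall a, (lvl a < Lm)%N.
Variables (L0 L1 : 'M[F]_N -> Prop) (fam0 fam1 : seq 'M[F]_N) (e0 e1 K : nat).
Hypothesis hsp0 : forall X, L0 X -> exists c : 'I_K -> F, X = \sum_(b < K) c b *: nth 0 fam0 b.
Hypothesis hsp1 : forall X, L1 X -> exists c : 'I_K -> F, X = \sum_(b < K) c b *: nth 0 fam1 b.
Hypothesis hG0 : forall b, inG lvl (e0 <= b)%N (nth 0 fam0 b).
Hypothesis hG1 : forall b, inG lvl (e1 <= b)%N (nth 0 fam1 b).
Variables (k n : nat).

Let famg i := if (i < k)%N then fam0 else fam1.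
Let eg i := if (i < k)%N then e0 else e1.

Definition sub_of (tau : {ffun 'I_n -> 'I_K}) : nat -> 'M[F]_N :=
  fun i => if insub i is Some i' then nth 0 (famg i) (tau i') else 0.

Definition wt (tau : {ffun 'I_n -> 'I_K}) (i : nat) : nat :=
  if insub i is Some i' then (eg i <= tau i')%N : nat else 0%N.

Definition Tset := [pred tau : {ffun 'I_n -> 'I_K} | (\sum_(i <- iota 0 n) wt tau i < Lm)%N].

Let M := size (mons n).
Let mon j := nth (Leaf 0) (mons n) j.

Definition V (f : 'rV[F]_M) (sub : nat -> 'M[F]_N) :=
  \sum_(j < M) f 0 j *: teval k sub (mon j).

Lemma V_ext f sub sub' : (forall i, (i < n)%N -> sub i = sub' i) -> V f sub = V f sub'.
Proof.
move=> h; apply: eq_bigr => j _; congr (_ *: _); apply: teval_ext => i hi.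
apply: h; have := mons_leaves (ltn_ord j); move/perm_mem => /(_ i).
by rewrite hi mem_iota add0n => /esym.
Qed.

Lemma V_lin f sub j a X Y : (j < n)%N ->
  V f (upd sub j (a *: X + Y)) = a *: V f (upd sub j X) + V f (upd sub j Y).
Proof.
move=> hj; rewrite /V scaler_sumr -big_split; apply: eq_bigr => i _ /=.
rewrite teval_lin ?scalerDr ?scalerA 1?mulrC //.
have := mons_leaves (ltn_ord i); move/permP => /(_ (pred1 j)) ->.
by rewrite count_uniq_mem ?iota_uniq // mem_iota add0n hj.
Qed.

Lemma V_sum f sub j (c : 'I_K -> F) (W : 'I_K -> 'M[F]_N) : (j < n)%N ->
  V f (upd sub j (\sum_(b < K) c b *: W b)) = \sum_(b < K) c b *: V f (upd sub j (W b)).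
Proof.
move=> hj.
have g0 : V f (upd sub j 0) = 0.
  have := V_lin f sub 1 0 0 hj; rewrite scale1r scale1r addr0.
  by move=> h; have := subrr (V f (upd sub j 0)); rewrite {1}h addrK.
apply: (big_rec2 (fun x y => V f (upd sub j x) = y)) => // b y1 y2 _ <-.
exact: V_lin.
Qed.

Lemma V_ident f : (forall tau, V f (sub_of tau) = 0) -> is_gr_identity L0 L1 k f.
Proof.
move=> h0.
have Q : forall j sub,
  (forall i, (i < n)%N -> (i < j)%N -> exists c : 'I_K -> F, sub i = \sum_(b < K) c b *: nth 0 (famg i) b) ->
  (forall i, (i < n)%N -> (j <= i)%N -> exists b : 'I_K, sub i = nth 0 (famg i) b) ->
  V f sub = 0.
  elim=> [|j IH] sub hsp hb.
    have [tau htau] : exists tau : {ffun 'I_n -> 'I_K}, forall i : 'I_n, sub i = nth 0 (famg i) (tau i).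
      have [g hg] := fin_all_exists (fun (i : 'I_n) => hb i (ltn_ord i) (leq0n _)).
      by exists [ffun i => g i] => i; rewrite ffunE.
    rewrite -(h0 tau); apply: V_ext => i hi; rewrite /sub_of insubT /=.
    exact: htau (Ordinal hi).
  have [jn|nj] := ltnP j n; last first.
    apply: IH => i hi hij; first by apply: hsp => //; apply: ltnW.
    by move: (leq_trans nj hij); rewrite leqNgt hi.
  have [c hc] := hsp j jn (ltnSn j).
  rewrite (V_ext f (sub' := upd sub j (sub j))); last by move=> i _; rewrite /upd; case: eqP => // ->.
  rewrite hc V_sum // big1 // => b _; rewrite IH ?scaler0 //.
    move=> i hi hij; rewrite /upd (ltn_eqF hij); apply: hsp => //; exact: ltnW.
  move=> i hi hji; rewrite /upd; case: eqP => [->|/eqP ne]; first by exists b.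
  by apply: hb; rewrite // ltn_neqAle eq_sym ne.
move=> sub hL0 hL1; apply: (Q n) => [i hi _|i hi]; last by rewrite leqNgt hi.
rewrite /famg; case: ifP => hk; first exact/hsp0/hL0.
by apply/hsp1/hL1; rewrite hi andbT leqNgt hk.
Qed.

Lemma V_outside f tau : tau \notin Tset -> V f (sub_of tau) = 0.
Proof.
rewrite inE -leqNgt => hT; apply: big1 => j _.
have -> : teval k (sub_of tau) (mon j) = 0; last by rewrite scaler0.
have HS : forall i, inG lvl (wt tau i) (sub_of tau i).
  move=> i; rewrite /sub_of /wt; case: insubP => [i' _ _|_]; last exact: inG0.
  by rewrite /famg /eg; case: ifP.
apply: (inG_zero hlvl _ (@teval_G F N lvl k (sub_of tau) (wt tau) (mon j) HS)).
by rewrite (perm_big _ (mons_leaves (ltn_ord j))).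
Qed.

Lemma codim_bound : (codim_kn L0 L1 k n <= #|Tset| * N * N)%N.
Proof.
apply/bigmax_leqP => d /asboolP [A hA].
pose I := ('I_#|Tset| * 'I_N * 'I_N)%type.
pose Phi : 'M[F]_(M, #|{: I}|) := \matrix_(j, c)
   (let: (t, a, b) := enum_val c in teval k (sub_of (enum_val t)) (mon j) a b).
have key f : f *m Phi = 0 -> is_gr_identity L0 L1 k f.
  move=> hf; apply: V_ident => tau.
  have [hT|hT] := boolP (tau \in Tset); last exact: V_outside.
  apply/matrixP => a b; rewrite /V summxE [RHS]mxE.
  have := congr1 (fun X : 'M[F]_(1, #|{: I}|) => X 0 (enum_rank ((enum_rank_in hT tau, a, b) : I))) hf.
  rewrite !mxE => h; rewrite -[X in _ = X]h; apply: eq_bigr => j _.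
  by rewrite !mxE enum_rankK /= enum_rankK_in.
suff : row_free (A *m Phi).
  by move/eqP => <-; rewrite (leq_trans (rank_leq_col _)) // card_prod card_prod !card_ord.
rewrite -kermx_eq0; apply/eqP/row_matrixP => i; rewrite row0.
apply: hA; apply: key; rewrite -mulmxA -row_mul mulmx_ker row0 //.
Qed.

Lemma sum_lt_min (K' e : nat) : (\sum_(b < K') (b < e : nat) = minn K' e)%N.
Proof.
elim: K' => [|K' IH]; first by rewrite big_ord0 min0n.
rewrite big_ord_recr /= IH; case: (ltnP K' e) => h /=; lia.
Qed.

Lemma Tcount (R : realFieldType) (dl : R) : 0 <= dl -> dl <= 1 -> (k <= n)%N ->
  #|Tset|%:R * dl ^+ Lm.-1 <= (e0%:R + K%:R * dl) ^+ k * (e1%:R + K%:R * dl) ^+ (n - k).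
Proof.
move=> d0 d1 kn.
have s_eq tau : (\sum_(i <- iota 0 n) wt tau i = \sum_(i < n) (eg i <= tau i : nat))%N.
  have -> : iota 0 n = index_iota 0 n by rewrite /index_iota subn0.
  by rewrite big_mkord; apply: eq_bigr => i _; rewrite /wt valK.
apply: (@le_trans _ _ (\sum_(tau in Tset) dl ^+ (\sum_(i < n) (eg i <= tau i : nat)))).
  rewrite mulr_natl -(sumr_const Tset).
  apply: ler_sum => tau; rewrite inE s_eq => h.
  by apply: ler_wiXn2l => //; rewrite -ltnS prednK // (leq_ltn_trans _ h).
apply: (@le_trans _ _ (\sum_(tau : {ffun 'I_n -> 'I_K}) dl ^+ (\sum_(i < n) (eg i <= tau i : nat)))).
  rewrite [X in _ <= X](bigID (mem Tset)) /= lerDl; apply: sumr_ge0 => i _.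
  exact: exprn_ge0.
under eq_bigr do rewrite -prodrXr.
rewrite -(bigA_distr_bigA (fun (i : 'I_n) (b : 'I_K) => dl ^+ (eg i <= b : nat))) /=.
apply: (@le_trans _ _ (\prod_(i < n) ((eg i)%:R + K%:R * dl))).
  apply: ler_prod => i _; apply/andP; split; first by apply: sumr_ge0 => b _; exact: exprn_ge0.
  apply: (@le_trans _ _ (\sum_(b < K) ((b < eg i : nat)%:R + dl))).
    apply: ler_sum => b _; case: leqP => h /=; first by rewrite add0r expr1.
    by rewrite expr0 lerDl.
  rewrite big_split /= sumr_const card_ord mulr_natl -natr_sum sum_lt_min lerD2r ler_nat.
  exact: geq_minr.
rewrite -(big_mkord (fun=> true) (fun i => (eg i)%:R + K%:R * dl)) (@big_cat_nat _ _ _ k 0 n _ _ (leq0n k) kn) /=.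
rewrite (@eq_big_nat _ _ _ 0 k _ (fun=> e0%:R + K%:R * dl)); last first.
  by move=> i /andP [_ hi]; rewrite /eg hi.
rewrite (@eq_big_nat _ _ _ k n _ (fun=> e1%:R + K%:R * dl)); last first.
  by move=> i /andP [hi _]; rewrite /eg ltnNge hi.
by rewrite !prodr_const_nat subn0.
Qed.

End Codim.
Lemma gr_codim_le (F : fieldType) (N : nat) (lvl : 'I_N -> nat) (Lm : nat)
  (hlvl : forall a, (lvl a < Lm)%N)
  (L0 L1 : 'M[F]_N -> Prop) (fam0 fam1 : seq 'M[F]_N) (e0 e1 K : nat)
  (hsp0 : forall X, L0 X -> exists c : 'I_K -> F, X = \sum_(b < K) c b *: nth 0 fam0 b)
  (hsp1 : forall X, L1 X -> exists c : 'I_K -> F, X = \sum_(b < K) c b *: nth 0 fam1 b)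
  (hG0 : forall b, inG lvl (e0 <= b)%N (nth 0 fam0 b))
  (hG1 : forall b, inG lvl (e1 <= b)%N (nth 0 fam1 b))
  (R : realFieldType) (dl : R) (n : nat) : 0 <= dl -> dl <= 1 ->
  (gr_codim L0 L1 n)%:R * dl ^+ Lm.-1 <=
  (N * N)%:R * (e0%:R + e1%:R + 2%:R * K%:R * dl) ^+ n.
Proof.
move=> d0 d1.
have -> : e0%:R + e1%:R + 2%:R * K%:R * dl = (e1%:R + K%:R * dl) + (e0%:R + K%:R * dl) :> R.
  by rewrite mulr2n !mulrDl !mul1r; rewrite addrACA addrC.
rewrite exprDn /gr_codim natr_sum mulr_suml mulr_sumr; apply: ler_sum => k _.
have kn : (k <= n)%N by rewrite -ltnS.
set T := #|Tset Lm e0 e1 K k n|.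
set c := codim_kn L0 L1 k n.
have hc : (c <= T * N * N)%N := codim_bound hlvl hsp0 hsp1 hG0 hG1 k n.
have ht := Tcount Lm e0 e1 K d0 d1 kn.
have hd : 0 <= dl ^+ Lm.-1 by apply: exprn_ge0.
apply: (@le_trans _ _ ('C(n, k)%:R * ((T * N * N)%:R * dl ^+ Lm.-1))).
  rewrite natrM -mulrA ler_wpM2l // ler_wpM2r // ler_nat //.
apply: (@le_trans _ _ ('C(n, k)%:R * ((N * N)%:R * ((e0%:R + K%:R * dl) ^+ k * (e1%:R + K%:R * dl) ^+ (n - k))))).
  rewrite ler_wpM2l // -mulnA natrM mulrAC mulrC ler_wpM2l //.
rewrite le_eqVlt; apply/orP; left; apply/eqP; ring.
Qed.
Lemma limsup_le_ev (R : realType) (u : nat -> R) (l : R) N0 :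
  (forall n, (N0 <= n)%N -> u n <= l) -> (limn_esup (fun n => (u n)%:E) <= l%:E)%E.
Proof.
move=> h; rewrite limn_esup_lim; apply: lime_le; first exact: is_cvg_esups.
exists N0 => // m /= hm; apply: ge_ereal_sup => _ [k /= hk <-].
by rewrite lee_fin h // (leq_trans hm hk).
Qed.

Lemma bernoulli_ineq (R : realFieldType) (x : R) n : 0 <= x -> 1 + n%:R * x <= (1 + x) ^+ n.
Proof.
move=> x0; elim: n => [|n IH]; first by rewrite mul0r addr0 expr0.
rewrite exprS; apply: (@le_trans _ _ ((1 + x) * (1 + n%:R * x))).
  rewrite -natr1; have hn : 0 <= n%:R :> R by [].
  have := mulr_ge0 hn (mulr_ge0 x0 x0); nra.
by rewrite ler_wpM2l // addr_ge0.
Qed.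

Lemma asym (R : realType) (c : nat -> nat) (B : R) (L : nat) (C0 K0 : R) :
  0 < B -> 0 < C0 -> 0 <= K0 ->
  (forall (dl : R) n, 0 < dl -> dl <= 1 -> (c n)%:R * dl ^+ L <= C0 * (B + K0 * dl) ^+ n) ->
  (limn_esup (fun n => (((c n)%:R : R) `^ (n%:R^-1))%:E) <= B%:E)%E.
Proof.
move=> B0 C00 K00 h; apply/lee_addgt0Pr => e e0.
pose dl := Num.min 1 (e / (2 * (K0 + 1))).
have dl0 : 0 < dl by rewrite lt_min ltr01 /= divr_gt0 // mulr_gt0 // ltr_wpDl.
have dl1 : dl <= 1 by rewrite ge_min lexx.
have Kdl : K0 * dl <= e / 2.
  have : dl <= e / (2 * (K0 + 1)) by rewrite ge_min lexx orbT.
  rewrite ler_pdivlMr ?mulr_gt0 ?ltr_wpDl // => hd.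
  rewrite ler_pdivlMr //; apply: le_trans hd; rewrite mulrC mulrA; nra.
pose b1 := B + K0 * dl; pose b2 := B + e.
have b10 : 0 < b1 by rewrite /b1 ltr_wpDr // mulr_ge0 // ltW.
pose C := C0 / dl ^+ L.
have hc n : (c n)%:R <= C * b1 ^+ n.
  rewrite /C mulrAC ler_pdivlMr ?exprn_gt0 //; exact: h.
pose rho := b2 / b1.
have rho1 : 0 < rho - 1.
  by rewrite subr_gt0 /rho ltr_pdivlMr // mul1r /b1 /b2 ltrD2l; lra.
pose N0 := (Num.truncn (C / (rho - 1))).+1.
apply: (@limsup_le_ev _ _ _ N0) => n hn.
have n0 : (0 < n)%N by apply: leq_trans hn.
have hCr : C <= rho ^+ n.
  have e1 : 1 + (rho - 1) = rho by rewrite addrC subrK.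
  have := bernoulli_ineq n (ltW rho1); rewrite e1 => hb.
  apply: le_trans hb.
  have t1 := Num.Theory.truncnS_gt (C / (rho - 1)).
  have t2 : C < N0%:R * (rho - 1) by rewrite -ltr_pdivrMr.
  have t3 : N0%:R <= n%:R :> R by rewrite ler_nat.
  nra.
have hcn : (c n)%:R <= b2 ^+ n.
  apply: le_trans (hc n) _.
  have -> : b2 = rho * b1 by rewrite /rho mulrVK // unitfE gt_eqF.
  by rewrite exprMn ler_wpM2r // exprn_ge0 // ltW.
have b20 : 0 <= b2 by rewrite /b2 addr_ge0 // ltW.
apply: (@le_trans _ _ ((b2 ^+ n) `^ (n%:R^-1))).
  by apply: ge0_ler_powR => //; rewrite ?invr_ge0 // nnegrE // exprn_ge0.
rewrite -powR_mulrn // -powRrM mulfV ?powRr1 // pnatr_eq0 -lt0n //.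
Qed.
Section St.
Variables (F : fieldType) (t : nat).

Definition lvlL (a : 'I_t) : nat := (2 * a)%N.
Definition lvlR (a : 'I_t) : nat := (2 * a + (2 * a + 1 == t))%N.
Definition lvlS (c : 'I_(t + t)) : nat :=
  match split c with inl a => lvlL a | inr a => lvlR a end.

Lemma lvlS_l a : lvlS (lshift t a) = lvlL a.
Proof. by rewrite /lvlS (unsplitK (inl _ a)). Qed.
Lemma lvlS_r a : lvlS (rshift t a) = lvlR a.
Proof. by rewrite /lvlS (unsplitK (inr _ a)). Qed.

Lemma lvlS_lt c : (lvlS c < t + t)%N.
Proof.
rewrite /lvlS /lvlL /lvlR; case: split => a; have := ltn_ord a => //=.
  lia.
by case: (2 * a + 1 == t)%N => /=; lia.
Qed.

Lemma entries_block (P : 'I_(t + t) -> 'I_(t + t) -> Prop) :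
  (forall a b, P (lshift t a) (lshift t b)) -> (forall a b, P (lshift t a) (rshift t b)) ->
  (forall a b, P (rshift t a) (lshift t b)) -> (forall a b, P (rshift t a) (rshift t b)) ->
  forall c e, P c e.
Proof.
move=> h1 h2 h3 h4 c e; rewrite -(splitK c) -(splitK e).
by case: (split c) => a; case: (split e) => b /=.
Qed.

Lemma inG_block d (A B C D : 'M[F]_t) :
  (forall a b, A a b != 0 -> (lvlL a + d <= lvlL b)%N) ->
  (forall a b, B a b != 0 -> (lvlL a + d <= lvlR b)%N) ->
  (forall a b, C a b != 0 -> (lvlR a + d <= lvlL b)%N) ->
  (forall a b, D a b != 0 -> (lvlR a + d <= lvlR b)%N) ->
  inG lvlS d (block_mx A B C D).
Proof.
move=> hA hB hC hD; apply: entries_block => a b;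
  rewrite ?lvlS_l ?lvlS_r ?block_mxEul ?block_mxEur ?block_mxEdl ?block_mxEdr; auto.
Qed.

Lemma eq_block (X Y : 'M[F]_(t + t)) :
  (forall a b, X (lshift t a) (lshift t b) = Y (lshift t a) (lshift t b)) ->
  (forall a b, X (lshift t a) (rshift t b) = Y (lshift t a) (rshift t b)) ->
  (forall a b, X (rshift t a) (lshift t b) = Y (rshift t a) (lshift t b)) ->
  (forall a b, X (rshift t a) (rshift t b) = Y (rshift t a) (rshift t b)) -> X = Y.
Proof.
move=> h1 h2 h3 h4; apply/matrixP; exact: (entries_block (P := fun c e => X c e = Y c e)).
Qed.

Definition U (p : 'I_(t + t) * 'I_(t + t)) : 'M[F]_(t + t) :=
  if (lvlS p.1 < lvlS p.2)%N then delta_mx p.1 p.2 else 0.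

Lemma inG_U p : inG lvlS 1 (U p).
Proof.
rewrite /U; case: ltnP => h; last exact: inG0.
move=> a b; rewrite mxE.
case E1: (a == p.1); case E2: (b == p.2); rewrite /= ?eqxx //.
by move: E1 E2 => /eqP -> /eqP ->; rewrite addn1.
Qed.

Definition flatpart (X : 'M[F]_(t + t)) : 'M[F]_(t + t) :=
  \matrix_(a, b) if lvlS a == lvlS b then X a b else 0.

Lemma flat_decomp (X : 'M[F]_(t + t)) :
  (forall a b, X a b != 0 -> (lvlS a <= lvlS b)%N) ->
  X = flatpart X + \sum_p X p.1 p.2 *: U p.
Proof.
move=> hX; apply/matrixP => a b; rewrite !mxE summxE (bigD1 (a, b)) //= big1; last first.
  move=> [a' b'] /= hne; rewrite /U mxE; case: ifP => _; rewrite ?mxE ?mulr0 //.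
  case: eqP => [ea|]; case: eqP => [eb|] //=; rewrite ?mulr0 //.
  by move: hne; rewrite ea eb eqxx.
rewrite /U /=; case: (ltngtP (lvlS a) (lvlS b)) => h.
- by rewrite !mxE !eqxx mulr1 add0r addr0.
- have Xab : X a b = 0 by apply/eqP; apply/negP => /negP/hX; rewrite leqNgt h.
  by rewrite Xab scale0r mxE !addr0.
- by rewrite scaler0 mxE !addr0.
Qed.

Definition dnat (i : nat) : 'M[F]_t := \matrix_(a, b) ((a == i :> nat) && (b == i :> nat))%:R.

End St.
Section Inv.
Variables (F : fieldType) (t : nat).

Lemma diag_mul_l (s : 'I_t -> F) (Y : 'M[F]_t) i j :
  ((\matrix_(a, b) (if a == b then s a else 0)) *m Y) i j = s i * Y i j.
Proof.
rewrite mxE (bigD1 i) //= big1 ?addr0; first by rewrite mxE eqxx.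
by move=> k /negbTE hk; rewrite mxE eq_sym hk mul0r.
Qed.

Lemma diag_mul_r (s : 'I_t -> F) (Y : 'M[F]_t) i j :
  (Y *m (\matrix_(a, b) (if a == b then s a else 0))) i j = Y i j * s j.
Proof.
rewrite mxE (bigD1 j) //= big1 ?addr0; first by rewrite mxE eqxx.
by move=> k /negbTE hk; rewrite mxE hk mulr0.
Qed.

Let sg (i : 'I_t) : F := if (i < t./2)%N then 1 else -1.

Lemma symp_entry (x : 'M[F]_t) i j : inv_symp x i j = sg i * inv_orth x i j * sg j.
Proof. by rewrite /inv_symp /Dsymp diag_mul_r diag_mul_l. Qed.

Lemma invol_UT kd (x : 'M[F]_t) : is_UT x -> is_UT (invol kd x).
Proof.
have ho : is_UT x -> is_UT (inv_orth x).
  move=> hx i j hij; rewrite mxE; apply: hx => /=; have := ltn_ord i; have := ltn_ord j; lia.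
case: kd => hx /=; first exact: ho.
by move=> i j hij; rewrite symp_entry ho // mulr0 mul0r.
Qed.

Lemma invol_diag kd (x : 'M[F]_t) a : invol kd x a a = x (rev_ord a) (rev_ord a).
Proof.
case: kd => /=; first by rewrite mxE.
rewrite symp_entry mxE /sg; case: ifP => _; first by rewrite mulr1 mul1r.
by rewrite mulrN1 mulN1r opprK.
Qed.

End Inv.
Section Span.
Variables (F : fieldType) (N K : nat) (fam : seq 'M[F]_N).
Definition spanK (X : 'M[F]_N) := exists c : 'I_K -> F, X = \sum_(b < K) c b *: nth 0 fam b.
Lemma span0 : spanK 0.
Proof. by exists (fun=> 0); rewrite big1 // => b _; rewrite scale0r. Qed.
Lemma spanD X Y : spanK X -> spanK Y -> spanK (X + Y).
Proof.
move=> [c ->] [d ->]; exists (fun b => c b + d b).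
by rewrite -big_split; apply: eq_bigr => b _; rewrite scalerDl.
Qed.
Lemma spanZ a X : spanK X -> spanK (a *: X).
Proof.
move=> [c ->]; exists (fun b => a * c b).
by rewrite scaler_sumr; apply: eq_bigr => b _; rewrite scalerA.
Qed.
Lemma span_nth b : (b < K)%N -> spanK (nth 0 fam b).
Proof.
move=> hb; exists (fun i => (i == Ordinal hb)%:R).
rewrite (bigD1 (Ordinal hb)) //= eqxx scale1r big1 ?addr0 // => i /negbTE ->.
by rewrite scale0r.
Qed.
Lemma span_sum (I : finType) (G : I -> 'M[F]_N) : (forall i, spanK (G i)) -> spanK (\sum_i G i).
Proof. by move=> h; apply: (big_ind spanK span0 spanD) => i _. Qed.
End Span.

Section Fam.
Variables (F : fieldType) (t : nat) (kd : inv_kind).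

Let N := (t + t)%N.
Definition dnatS (i : nat) : 'M[F]_t := \matrix_(a, b) ((a == i :> nat) && (b == i :> nat))%:R.
Definition hM (i : nat) : 'M[F]_N := block_mx (dnatS i) 0 0 (- dnatS (t.-1 - i)).
Definition jumps : seq 'M[F]_N := [seq U F p | p <- enum {: 'I_N * 'I_N}].
Definition fam0 := mkseq hM t ++ jumps.
Definition KK := (2 * t + N * N)%N.

Lemma sum_sel (G : 'I_t -> F) (S : 'I_t -> bool) j :
  (forall i, S i -> i = j) -> \sum_(i < t) G i * (S i)%:R = if S j then G j else 0.
Proof.
move=> h; rewrite (bigD1 j) //= big1 ?addr0.
  by case: (S j); rewrite ?mulr1 ?mulr0.
move=> i hi; case hS: (S i); last by rewrite mulr0.
by move: hi; rewrite (h i hS) eqxx.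
Qed.

Lemma lvlL_eq (a b : 'I_t) : (lvlL a == lvlL b) = (a == b).
Proof. rewrite /lvlL; apply/eqP/eqP => [h|-> //]; apply: val_inj => /=; lia. Qed.
Lemma lvlR_eq (a b : 'I_t) : (lvlR a == lvlR b) = (a == b).
Proof.
rewrite /lvlR; apply/eqP/eqP => [h|-> //]; apply: val_inj => /=.
move: h; case: (2 * a + 1 == t)%N; case: (2 * b + 1 == t)%N => /=; lia.
Qed.
Lemma lvlR_mono (a b : 'I_t) : (a <= b)%N -> (lvlR a <= lvlR b)%N.
Proof.
rewrite /lvlR => h; case: eqP => ha; case: eqP => hb /=; lia.
Qed.
Lemma nth_fam0_h (i : nat) : (i < t)%N -> nth 0 fam0 i = hM i.
Proof. by move=> hi; rewrite /fam0 nth_cat size_mkseq hi nth_mkseq. Qed.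

Lemma nth_jumps (p : 'I_N * 'I_N) : nth 0 jumps (enum_rank p) = U F p.
Proof.
by rewrite /jumps (nth_map p) ?nth_enum_rank // -cardE ltn_ord.
Qed.

Lemma nth_fam0_j (r : nat) : nth 0 fam0 (t + r) = nth 0 jumps r.
Proof. by rewrite /fam0 nth_cat size_mkseq ltnNge leq_addr /= addKn. Qed.

Lemma span0_L0 M : St_even kd M -> spanK KK fam0 M.
Proof.
move=> [x [hx ->]].
set X := block_mx _ _ _ _.
have hb : inG (lvlS (t:=t)) 0 X.
  apply: inG_block => a b; rewrite ?mxE ?eqxx // ?addn0.
    by move=> hab; rewrite /lvlL leq_mul2l; apply/negP => /negP; rewrite -ltnNge => /hx /eqP; rewrite (negbTE hab).
  rewrite oppr_eq0 => hab; apply: lvlR_mono; rewrite leqNgt; apply/negP => /(invol_UT kd hx) /eqP.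
  by rewrite (negbTE hab).
rewrite (flat_decomp (X := X)); last by move=> a b /hb; rewrite addn0.
apply: spanD; last first.
  apply: span_sum => p; apply: spanZ.
  rewrite -nth_jumps -nth_fam0_j; apply: span_nth.
  have : forall r : nat, (r < #|{: 'I_N * 'I_N}|)%N -> (t + r < KK)%N.
    by move=> r; rewrite card_prod !card_ord /KK /N; lia.
  by apply; exact: ltn_ord.
have -> : flatpart X = \sum_(i < t) x i i *: hM i.
  apply: eq_block => a b; rewrite mxE ?lvlS_l ?lvlS_r summxE.
  - rewrite block_mxEul lvlL_eq.
    under eq_bigr do rewrite mxE /hM block_mxEul mxE.
    rewrite (sum_sel _ (j := a)) => [|i /andP [/eqP e _]]; last exact: val_inj.
    rewrite eqxx /=; have -> : (b == a :> nat) = (a == b) by rewrite eq_sym.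
    by case: eqP => [->|].
  - rewrite block_mxEur mxE if_same big1 // => i _; rewrite mxE /hM block_mxEur mxE mulr0 //.
  - rewrite block_mxEdl mxE if_same big1 // => i _; rewrite mxE /hM block_mxEdl mxE mulr0 //.
  - rewrite block_mxEdr lvlR_eq.
    under eq_bigr do rewrite mxE /hM block_mxEdr !mxE mulrN.
    rewrite sumrN (sum_sel _ (j := rev_ord a)) => [|i /andP [/eqP e _]]; last first.
      apply: val_inj => /=; have := ltn_ord i; have := ltn_ord a; lia.
    have -> : (a == (t.-1 - rev_ord a)%N :> nat) = true by apply/eqP => /=; have := ltn_ord a; lia.
    have -> : (b == (t.-1 - rev_ord a)%N :> nat) = (b == a).
      by apply/eqP/eqP => [h|->]; [apply: val_inj => /=; move: h => /=; have := ltn_ord a; lia | rewrite /=; have := ltn_ord a; lia].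
    rewrite eq_sym; case: eqP => [->|]; last by rewrite oppr0.
    by rewrite mxE invol_diag.
apply: span_sum => i; apply: spanZ.
by rewrite -nth_fam0_h //; apply: span_nth; rewrite /KK; have := ltn_ord i; lia.
Qed.

Lemma dnat_nz i (a c : 'I_t) : dnatS i a c != 0 -> a = c /\ (a = i :> nat).
Proof.
rewrite mxE; case H: ((a == i :> nat) && (c == i :> nat)); last by rewrite eqxx.
by move: H => /andP [/eqP e1 /eqP e2] _; split => //; apply: val_inj => /=; rewrite e1 e2.
Qed.

Lemma inG_fam0 b : inG (lvlS (t:=t)) (t <= b)%N (nth 0 fam0 b).
Proof.
case: (ltnP b t) => hb /=.
  rewrite nth_fam0_h //; apply: inG_block => a c.
  - by move/dnat_nz => [-> _]; rewrite addn0.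
  - by rewrite mxE eqxx.
  - by rewrite mxE eqxx.
  - by rewrite [X in X != 0]mxE oppr_eq0 => /dnat_nz [-> _]; rewrite addn0.
rewrite -(subnKC hb) nth_fam0_j.
case: (ltnP (b - t) (size jumps)) => h.
  by have /mapP [p _ ->] := mem_nth 0 h; apply: inG_U.
rewrite nth_default //; exact: inG0.
Qed.

End Fam.
Section Fam1.
Variables (F : fieldType) (t : nat) (kd : inv_kind).
Hypothesis hchar : [pchar F] =i pred0.

Let N := (t + t)%N.
Definition S1 (i : nat) (a b : 'I_t) := [&& (2 * i + 1 < t)%N, (a == i :> nat) & (b == i :> nat)].
Definition S2 (i : nat) (a b : 'I_t) :=
  [&& (2 * i + 1 < t)%N, (a == (t.-1 - i)%N :> nat) & (b == (t.-1 - i)%N :> nat)].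
Definition pM (i : nat) : 'M[F]_t := \matrix_(a, b) ((S1 i a b)%:R + (S2 i a b)%:R).
Definition qM (i : nat) : 'M[F]_t := \matrix_(a, b) ((S1 i a b)%:R - (S2 i a b)%:R).
Definition PM i : 'M[F]_N := block_mx 0 (pM i) 0 0.
Definition QM i : 'M[F]_N := block_mx 0 0 (qM i) 0.
Definition fam1 := mkseq (fun b => if odd b then QM b./2 else PM b./2) (t + t) ++ jumps F t.

Lemma S_nz i (a b : 'I_t) : S1 i a b || S2 i a b ->
  [/\ a = b, (2 * i + 1 < t)%N & (2 * a + 1 != t)%N].
Proof.
have := ltn_ord a; have := ltn_ord b.
rewrite /S1 /S2 => ha hb /orP [/and3P [h /eqP e1 /eqP e2]|/and3P [h /eqP e1 /eqP e2]];
  (split; [apply: val_inj => /=; lia| by []| apply/eqP; lia]).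
Qed.

Lemma pair_eval (G : 'I_t -> F) (a b : 'I_t) (s : F) :
  \sum_(i < t) G i * ((S1 i a b)%:R + s * (S2 i a b)%:R) =
  if a == b then (if (2 * a + 1 < t)%N then G a else if (t < 2 * a + 1)%N then s * G (rev_ord a) else 0)
  else 0.
Proof.
have ha := ltn_ord a; have hb := ltn_ord b.
rewrite (eq_bigr (fun i : 'I_t => G i * (S1 i a b)%:R + (s * G i) * (S2 i a b)%:R)); last first.
  by move=> i _; ring.
rewrite big_split /= (sum_sel _ (j := a)); last first.
  by move=> i /and3P [_ /eqP e _]; apply: val_inj.
rewrite (sum_sel (fun i => s * G i) (j := rev_ord a)); last first.
  move=> i /and3P [_ /eqP e _]; apply: val_inj => /=; have := ltn_ord i; lia.
rewrite /S1 /S2 /= eqxx.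
have -> : (a == (t.-1 - (t - a.+1))%N :> nat) = true by apply/eqP; lia.
have -> : (b == (t.-1 - (t - a.+1))%N :> nat) = (a == b).
  by rewrite eq_sym; apply/eqP/eqP => [e|->]; [apply: val_inj => /=; lia| lia].
have -> : (b == a :> nat) = (a == b) by rewrite eq_sym.
have -> : (2 * (t - a.+1) + 1 < t)%N = (t < 2 * a + 1)%N by apply/idP/idP; lia.
case: (a == b); rewrite /= ?andbF ?addr0 //.
case: (ltngtP (2 * a + 1) t) => h /=; rewrite ?addr0 ?add0r //.
Qed.
Lemma entry_add m n (A B : 'M[F]_(m, n)) i j : (A + B) i j = A i j + B i j.
Proof. by rewrite mxE. Qed.
Lemma entry_scale m n c (A : 'M[F]_(m, n)) i j : (c *: A) i j = c * A i j.
Proof. by rewrite mxE. Qed.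
Lemma entry0 m n i j : (0 : 'M[F]_(m, n)) i j = 0.
Proof. by rewrite mxE. Qed.

Lemma lvlLR_eq (a b : 'I_t) : (lvlL a == lvlR b) = (a == b) && (2 * a + 1 != t)%N.
Proof.
rewrite /lvlL /lvlR; have := ltn_ord a; have := ltn_ord b => hb ha.
case: (a =P b) => [<-|nab] /=.
  by case: eqP => h /=; apply/eqP; lia.
apply/eqP => h; apply: nab; apply: val_inj; move: h; case: eqP => /= h1; lia.
Qed.

Lemma lvlRL_eq (a b : 'I_t) : (lvlR a == lvlL b) = (a == b) && (2 * a + 1 != t)%N.
Proof. by rewrite eq_sym lvlLR_eq eq_sym; case: (a =P b) => [->|]. Qed.

Lemma rev_mid (a : 'I_t) : (2 * a + 1 = t)%N -> rev_ord a = a.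
Proof. by move=> h; apply: val_inj => /=; lia. Qed.

Lemma z_mid (z : 'M[F]_t) (a : 'I_t) : invol kd z = - z -> (2 * a + 1 = t)%N -> z a a = 0.
Proof.
move=> hz hm; have := invol_diag kd z a; rewrite hz mxE rev_mid // => /eqP.
rewrite eq_sym -addr_eq0 -mulr2n -mulr_natl mulf_eq0 => /orP [|/eqP //].
by move/pcharf0P: hchar => ->.
Qed.

Lemma nth_fam1_j (r : nat) : nth 0 fam1 (t + t + r) = nth 0 (jumps F t) r.
Proof. by rewrite /fam1 nth_cat size_mkseq ltnNge leq_addr /= addKn. Qed.

Lemma nth_fam1_P (i : nat) : (i < t)%N -> nth 0 fam1 (2 * i) = PM i.
Proof.
move=> hi; rewrite /fam1 nth_cat size_mkseq ifT; last lia.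
rewrite nth_mkseq; last lia.
by rewrite mul2n odd_double doubleK.
Qed.

Lemma nth_fam1_Q (i : nat) : (i < t)%N -> nth 0 fam1 (2 * i + 1) = QM i.
Proof.
move=> hi; rewrite /fam1 nth_cat size_mkseq ifT; last lia.
rewrite nth_mkseq; last lia.
by rewrite addn1 mul2n oddS odd_double /= uphalf_double.
Qed.

Lemma span1_L1 M : St_odd kd M -> spanK (KK t) fam1 M.
Proof.
move=> [y [z [hy hyy hz hzz ->]]].
set X := block_mx _ _ _ _.
have hb : inG (lvlS (t:=t)) 0 X.
  apply: inG_block => a b; rewrite ?entry0 ?eqxx // addn0 => hab.
    have : (a <= b)%N by rewrite leqNgt; apply/negP => /hy /eqP; rewrite (negbTE hab).
    by rewrite /lvlL /lvlR; case: eqP => _ /=; lia.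
  have : (a <= b)%N by rewrite leqNgt; apply/negP => /hz /eqP; rewrite (negbTE hab).
  rewrite leq_eqVlt => /orP [/eqP e|]; last by rewrite /lvlL /lvlR; case: eqP => _ /=; lia.
  have eab : a = b by apply: val_inj.
  move: hab; rewrite -eab /lvlL /lvlR; case: (@eqP _ (2 * a + 1)%N t) => hm /=; last lia.
  by rewrite (z_mid hzz hm) eqxx.
rewrite (flat_decomp (X := X)); last by move=> a b /hb; rewrite addn0.
apply: spanD; last first.
  apply: span_sum => p; apply: spanZ.
  rewrite -nth_jumps -nth_fam1_j; apply: span_nth.
  have : forall r : nat, (r < #|{: 'I_N * 'I_N}|)%N -> (t + t + r < KK t)%N.
    by move=> r; rewrite card_prod !card_ord /KK /N; lia.
  by apply; exact: ltn_ord.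
have -> : flatpart X = \sum_(i < t) (y i i *: PM i + z i i *: QM i).
  apply: eq_block => a b; rewrite mxE ?lvlS_l ?lvlS_r summxE.
  - rewrite block_mxEul entry0 if_same big1 // => i _.
    by rewrite entry_add !entry_scale /PM /QM !block_mxEul !entry0 !mulr0 addr0.
  - rewrite block_mxEur.
    under eq_bigr do rewrite entry_add !entry_scale /PM /QM !block_mxEur entry0 mulr0 addr0 mxE -[X in _ + X]mul1r.
    rewrite pair_eval lvlLR_eq.
    case: (a =P b) => [<-|] //=; case: (ltngtP (2 * a + 1) t) => h /=; rewrite ?mul1r //.
    all: try (by have := invol_diag kd y a; rewrite hyy).
    all: try (by rewrite h eqxx).
  - rewrite block_mxEdl.
    under eq_bigr do rewrite entry_add !entry_scale /PM /QM !block_mxEdl entry0 mulr0 add0r mxE -mulN1r.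
    rewrite pair_eval lvlRL_eq.
    case: (a =P b) => [<-|] //=; case: (ltngtP (2 * a + 1) t) => h /=; rewrite ?mulN1r //.
    all: try (by have := invol_diag kd z a; rewrite hzz mxE => <-; rewrite opprK).
    all: try (by rewrite h eqxx).
  - rewrite block_mxEdr entry0 if_same big1 // => i _.
    by rewrite entry_add !entry_scale /PM /QM !block_mxEdr !entry0 !mulr0 addr0.
apply: span_sum => i; apply: spanD; apply: spanZ.
  by rewrite -nth_fam1_P //; apply: span_nth; rewrite /KK; have := ltn_ord i; lia.
by rewrite -nth_fam1_Q //; apply: span_nth; rewrite /KK; have := ltn_ord i; lia.
Qed.

Lemma pM_nz i (a b : 'I_t) : pM i a b != 0 -> S1 i a b || S2 i a b.
Proof. by rewrite mxE; case: (S1 i a b); case: (S2 i a b); rewrite //= addr0 eqxx. Qed.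
Lemma qM_nz i (a b : 'I_t) : qM i a b != 0 -> S1 i a b || S2 i a b.
Proof. by rewrite mxE; case: (S1 i a b); case: (S2 i a b); rewrite //= subr0 eqxx. Qed.

Lemma inG_PM d i : ((2 * i + 1 < t)%N -> d = 0%N) -> inG (lvlS (t:=t)) d (PM i).
Proof.
move=> hd; apply: inG_block => a b; rewrite ?entry0 ?eqxx //.
move/pM_nz/S_nz => [<- /hd -> _]; rewrite addn0 /lvlL /lvlR; lia.
Qed.

Lemma inG_QM d i : ((2 * i + 1 < t)%N -> d = 0%N) -> inG (lvlS (t:=t)) d (QM i).
Proof.
move=> hd; apply: inG_block => a b; rewrite ?entry0 ?eqxx //.
move/qM_nz/S_nz => [<- /hd -> /negbTE hm]; rewrite addn0 /lvlL /lvlR hm; lia.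
Qed.

Lemma inG_fam1 b : inG (lvlS (t:=t)) (2 * t./2 <= b)%N (nth 0 fam1 b).
Proof.
case: (ltnP b (t + t)) => hb.
  rewrite /fam1 nth_cat size_mkseq hb nth_mkseq //.
  have hd : (2 * b./2 + 1 < t)%N -> (2 * t./2 <= b)%N = false.
    have := odd_double_half b; have := odd_double_half t; rewrite -!muln2.
    case: (odd b); case: (odd t) => /=; lia.
  by case: ifP => _; [apply: inG_QM | apply: inG_PM] => /hd ->.
rewrite -(subnKC hb) nth_fam1_j.
have -> : (2 * t./2 <= t + t + (b - (t + t)))%N = true.
  have := odd_double_half t; rewrite -!muln2; case: (odd t) => /=; lia.
case: (ltnP (b - (t + t)) (size (jumps F t))) => h.
  by have /mapP [p _ ->] := mem_nth 0 h; apply: inG_U.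
rewrite nth_default //; exact: inG0.
Qed.

End Fam1.
Unset Implicit Arguments.

Theorem proposition3 (F : fieldType) (R : realType) (t : nat) (kd : inv_kind) :
  [pchar F] =i pred0 ->
  (2 <= t)%N ->
  (kd = Symplectic -> ~~ odd t) ->
  (limn_esup (fun n : nat =>
      ((@gr_codim F (t + t) (@St_even F t kd) (@St_odd F t kd) n)%:R `^ (n%:R^-1) : R)%:E)
   <= (if odd t then (2 * t - 1)%:R else (2 * t)%:R)%:E)%E.
Proof.
move=> hchar ht _.
have hB : (if odd t then (2 * t - 1)%:R else (2 * t)%:R) = ((t + 2 * t./2)%N%:R : R).
  have := odd_double_half t; rewrite -muln2.
  by case: (odd t) => /= h; congr (_%:R); lia.
rewrite hB.
have hl : forall a, (lvlS (t:=t) a < t + t)%N := @lvlS_lt t.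
apply: (asym (C0 := ((t + t) * (t + t))%N%:R) (K0 := 2%:R * (KK t)%:R)
         (L := (t + t).-1)).
- by rewrite ltr0n; lia.
- by rewrite ltr0n; lia.
- by rewrite mulr_ge0.
move=> dl n d0 d1.
have := gr_codim_le hl (@span0_L0 F t kd) (@span1_L1 F t kd hchar)
   (fun b => @inG_fam0 F t b) (fun b => @inG_fam1 F t b) n (ltW d0) d1.
by rewrite natrD.
Qed.
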